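(* Let $\mathbb{F}$ be a field, $d\geq3$ and $V$ a vector space over $\mathbb{F}$ of dimension $d+1$. Let $E^*_0,\dots,E^*_d$ be a system of mutually orthogonal idempotents in $\mathrm{End}(V)$ and $A\in\mathrm{End}(V)$ with $E^*_iAE^*_j=0$ if $|i-j|>1$ and $E^*_iAE^*_j\neq0$ if $|i-j|=1$. Assume $A$ is multiplicity-free and bipartite with primitive idempotents $E_0,\dots,E_d$ and eigenvalues $\theta_0,\dots,\theta_d$. Let $\theta^*_0,\dots,\theta^*_d\in\mathbb{F}$ be mutually distinct and $A^*=\sum_i\theta^*_iE^*_i$. Assume $(E_0,E_1)$ is a tail and that the indexing is such that $E_2$ is the vertex of $\Delta$ other than $E_0$ adjacent to $E_1$. Fix a basis $v_0,\dots,v_d$ with $v_i\in E^*_iV$ and let $b_i,c_i,\alpha_i$ be as in the context. Let $a^*_i=\operatorname{tr}(E_iA^* )$, and let $b^*_0c^*_1$ be as in the context. Put $\psi=\theta^*_1+\theta^*_0-a^*_1-a^*_0$ and $\zeta=a^*_0a^*_1-b^*_0c^*_1-\theta^*_0\theta^*_1$. Then for $0\le i\le d$, $$c_i(\theta^*_{i-1}-\theta^*_0)(\theta^*_{i-1}-\theta^*_1)\alpha_{i-1}+b_i(\theta^*_{i+1}-\theta^*_0)(\theta^*_{i+1}-\theta^*_1)\alpha_{i+1}=\theta_2(\theta^*_i-\theta^*_0)(\theta^*_i-\theta^*_1)\alpha_i+(\theta_2-\theta_1)\psi\theta^*_i\alpha_i+(\theta_1-\theta_0)\psi a^*_0\alpha_i+(\theta_2-\theta_0)\zeta\alpha_i,$$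 where for $i=0$ the first term on the left (with coefficient $c_0=0$) and for $i=d$ the second term on the left (with coefficient $b_d=0$) are omitted.
   Context: A system of mutually orthogonal idempotents: $E^*_iE^*_j=\delta_{ij}E^*_i$, $\operatorname{rank}E^*_i=1$. $A$ multiplicity-free: $d+1$ distinct eigenvalues in $\mathbb{F}$; $E_i$ is the projection onto the $\theta_i$-eigenspace along the other eigenspaces. Bipartite: $\operatorname{tr}(E^*_iA)=0$ for all $i$. $\Delta$: graph on $E_0,\dots,E_d$ with $E_i\neq E_j$ adjacent iff $E_iA^*E_j\neq0$. $(E_0,E_1)$ is a tail if $E_0$ is adjacent to no vertex other than $E_1$ and $E_1$ is adjacent to at most one vertex other than $E_0$. The matrix $Y$ representing a map $X$ w.r.t. a basis $u_0,\dots,u_d$ satisfies $Xu_j=\sum_iY_{ij}u_i$. For the fixed basis $v_i\in E^*_iV$, the matrix of $A$ is tridiagonal with zero diagonal; $b_i$ ($0\le i\le d-1$) is its $(i,i+1)$-entry and $c_i$ ($1\le i\le d$) its $(i,i-1)$-entry; set $b_d=c_0=0$. The cosine sequence $\alpha_0,\dots,\alpha_d$ for $\theta_0$: $\alpha_0=1$ and $c_i\alpha_{i-1}+b_i\alpha_{i+1}=\theta_0\alpha_i$ for $0\le i\le d-1$ (equivalently $\sum_i\alpha_iv_i$ is the eigenvector of $A$ for $\theta_0$ with $\alpha_0=1$). For any basis $w_0,\dots,w_d$ with $w_i\in E_iV$, let $b^*_0$ and $c^*_1$ be the $(0,1)$- and $(1,0)$-entries of the matrix representing $A^*$; the product $b^*_0c^*_1$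 does not depend on this choice. *)

(* Defs.v *)
From mathcomp Require Import all_boot all_order all_algebra.
Set Implicit Arguments. Unset Strict Implicit. Unset Printing Implicit Defensive.
Import GRing.Theory.
Local Open Scope ring_scope.

(* V = 'cV[F]_(d.+1) (column vectors), End(V) = 'M[F]_(d.+1) acting on the left.
   Families indexed by 0..d are given as functions on nat (only indices <= d matter). *)

Definition basis_mx (F : fieldType) (n : nat) (u : nat -> 'cV[F]_n) : 'M[F]_n :=
  \matrix_(r < n, j < n) u (nat_of_ord j) r 0.

(* Matrix Y representing X w.r.t. the basis u (X u_j = sum_i Y_ij u_i). *)
Definition rep_mx (F : fieldType) (n : nat) (u : nat -> 'cV[F]_n) (X : 'M[F]_n)
  : 'M[F]_n := invmx (basis_mx u) *m X *m basis_mx u.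

Definition dual_mx (F : fieldType) (d : nat) (ths : nat -> F)
  (Es : nat -> 'M[F]_d.+1) : 'M[F]_d.+1 :=
  \sum_(i < d.+1) ths i *: Es i.

Definition bcoef (F : fieldType) (d : nat) (v : nat -> 'cV[F]_d.+1)
  (A : 'M[F]_d.+1) (i : nat) : F :=
  if (i < d)%N then rep_mx v A (inord i) (inord i.+1) else 0.
Definition ccoef (F : fieldType) (d : nat) (v : nat -> 'cV[F]_d.+1)
  (A : 'M[F]_d.+1) (i : nat) : F :=
  if ((0 < i) && (i <= d))%N then rep_mx v A (inord i) (inord i.-1) else 0.

(* Main.v *)
Require Import Defs.
From mathcomp Require Import all_boot all_order all_algebra.
From mathcomp Require Import ring zify.
Import GRing.Theory.
Local Open Scope ring_scope.

Section Helpers.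
Variable F : fieldType.
Variable n : nat.

Lemma sum_pick (f : 'I_n -> F) i : \sum_l (l == i)%:R * f l = f i.
Proof.
rewrite (bigD1 i) //= eqxx mul1r big1 ?addr0 // => l /negbTE ->; by rewrite mul0r.
Qed.

Lemma basis_e (u : nat -> 'cV[F]_n) (j : 'I_n) : basis_mx u *m delta_mx j (0 : 'I_1) = u j.
Proof. rewrite -colE; apply/matrixP => r c; by rewrite !mxE (ord1 c). Qed.

Lemma colext (A B : 'M[F]_n) :
  (forall j, A *m delta_mx j (0 : 'I_1) = B *m delta_mx j 0) -> A = B.
Proof.
move=> H; apply/matrixP => r c; move: (H c) => /matrixP /(_ r 0).
by rewrite -!colE !mxE.
Qed.

Lemma proj_rep (u : nat -> 'cV[F]_n) (X : 'M[F]_n) (i : 'I_n) :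
  (forall j : 'I_n, X *m u j = if j == i then u j else 0) ->
  X *m basis_mx u = basis_mx u *m delta_mx i i.
Proof.
move=> H; apply: colext => j; rewrite -!mulmxA basis_e H mul_delta_mx_cond eq_sym.
by case: eqP => [->|_]; rewrite ?mulr1n ?basis_e ?mulr0n ?mulmx0.
Qed.

Lemma Xform {P X N : 'M[F]_n} : P \in unitmx -> X *m P = P *m N -> X = P *m N *m invmx P.
Proof. by move=> hP H; rewrite -H mulmxK. Qed.

Lemma delta_sandwich (Y : 'M[F]_n) (i j : 'I_n) :
  delta_mx i i *m Y *m delta_mx j j = Y i j *: delta_mx i j.
Proof.
apply/matrixP => r c; rewrite !mxE.
have inner k : \sum_l delta_mx i i r l * Y l k = (r == i)%:R * Y i k.
  under eq_bigr => l _ do rewrite mxE.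
  case: (eqVneq r i) => [_|nri] /=.
    by rewrite sum_pick mul1r.
  by rewrite big1 ?mul0r // => l _; rewrite mul0r.
under eq_bigr => k _ do rewrite mxE inner mxE.
case: (eqVneq c j) => [_|ncj] /=.
  under eq_bigr => k _ do rewrite andbT mulrC.
  rewrite sum_pick; case: (r == i); rewrite /= ?mulr1 ?mul0r ?mulr0 ?mul1r //.
by rewrite big1 ?andbF ?mulr0 // => k _; rewrite andbF mulr0.
Qed.

Lemma conj_delta {P} (B : 'M[F]_n) {X Z : 'M[F]_n} {i j : 'I_n} : P \in unitmx ->
  X *m P = P *m delta_mx i i -> Z *m P = P *m delta_mx j j ->
  X *m B *m Z = P *m ((invmx P *m B *m P) i j *: delta_mx i j) *m invmx P.
Proof.
move=> hP hX hZ; rewrite -delta_sandwich (Xform hP hX) (Xform hP hZ).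
by rewrite !mulmxA.
Qed.

Lemma entry_zero (P B X Z : 'M[F]_n) (i j : 'I_n) : P \in unitmx ->
  X *m P = P *m delta_mx i i -> Z *m P = P *m delta_mx j j ->
  X *m B *m Z = 0 -> (invmx P *m B *m P) i j = 0.
Proof.
move=> hP hX hZ; rewrite (conj_delta B hP hX hZ) => H.
have : invmx P *m (P *m ((invmx P *m B *m P) i j *: delta_mx i j) *m invmx P) *m P = 0.
  by rewrite H mulmx0 mul0mx.
rewrite !mulmxA mulVmx // mul1mx mulmxKV // => /matrixP /(_ i j); rewrite !mxE !eqxx mulr1.
by [].
Qed.

Lemma entry_nz (P B X Z : 'M[F]_n) (i j : 'I_n) : P \in unitmx ->
  X *m P = P *m delta_mx i i -> Z *m P = P *m delta_mx j j ->
  X *m B *m Z != 0 -> (invmx P *m B *m P) i j != 0.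
Proof.
move=> hP hX hZ; rewrite (conj_delta B hP hX hZ); apply: contra => /eqP ->.
by rewrite scale0r mulmx0 mul0mx.
Qed.

Lemma trace_entry (P B X : 'M[F]_n) (i : 'I_n) : P \in unitmx ->
  X *m P = P *m delta_mx i i -> \tr (X *m B) = (invmx P *m B *m P) i i.
Proof.
move=> hP hX.
have hXX : (X *m X) *m P = P *m delta_mx i i.
  by rewrite -mulmxA hX mulmxA hX -mulmxA mul_delta_mx.
rewrite -[X in \tr (X *m B)](_ : X *m X = X); last first.
  by rewrite (Xform hP hX) !mulmxA mulmxKV // -(mulmxA P) mul_delta_mx.
rewrite -mulmxA mxtrace_mulC (conj_delta B hP hX hX) mxtrace_mulC.
rewrite mulKmx // mxtraceZ /mxtrace (bigD1 i) //= big1 ?addr0 ?mxE ?eqxx ?mulr1 //.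
by move=> k /negbTE nk; rewrite mxE nk.
Qed.


Lemma diag_rep (u : nat -> 'cV[F]_n) (X : 'M[F]_n) (s : 'I_n -> F) :
  basis_mx u \in unitmx -> (forall j : 'I_n, X *m u j = s j *: u j) ->
  forall r j, (invmx (basis_mx u) *m X *m basis_mx u) r j = (r == j)%:R * s j.
Proof.
move=> hU H r j.
have : (invmx (basis_mx u) *m X *m basis_mx u) *m delta_mx j (0 : 'I_1)
   = s j *: delta_mx j 0.
  rewrite -!mulmxA basis_e H -scalemxAr -(basis_e u j) mulKmx //.
move=> /matrixP /(_ r 0); rewrite -colE !mxE eqxx andbT mulrC.
by [].
Qed.

Lemma conj_sym (T Ti K Y N : 'M[F]_n) : T *m Ti = 1%:M ->
  Y *m K = K *m Y^T -> N = Ti *m Y *m T ->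
  N *m (Ti *m K *m Ti^T) = (Ti *m K *m Ti^T) *m N^T.
Proof.
move=> hT hYK ->.
have hTt : Ti^T *m T^T = 1%:M by rewrite -trmx_mul hT trmx1.
rewrite !trmx_mul.
have -> : Ti *m Y *m T *m (Ti *m K *m Ti^T) = Ti *m (Y *m K) *m Ti^T.
  by rewrite !mulmxA -(mulmxA _ T) hT mulmx1.
rewrite hYK !mulmxA -(mulmxA _ Ti^T) hTt mulmx1.
by [].
Qed.

Lemma mul_offdiag_r (X G : 'M[F]_n) :
  (forall r c, r != c -> G r c = 0) -> forall r c, (X *m G) r c = X r c * G c c.
Proof.
move=> hG r c; rewrite mxE (bigD1 c) //= big1 ?addr0 // => k nk.
by rewrite hG ?mulr0.
Qed.

Lemma mul_offdiag_l (X G : 'M[F]_n) :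
  (forall r c, r != c -> G r c = 0) -> forall r c, (G *m X) r c = G r r * X r c.
Proof.
move=> hG r c; rewrite mxE (bigD1 r) //= big1 ?addr0 // => k nk.
by rewrite hG ?mul0r // eq_sym.
Qed.

Lemma offdiag_unit (G : 'M[F]_n) :
  G \in unitmx -> (forall r c, r != c -> G r c = 0) -> forall r, G r r != 0.
Proof.
move=> hU hG r; apply/negP => /eqP h0.
move: hU; rewrite unitmxE unitfE (expand_det_row _ r) big1 ?eqxx //.
move=> c _; case: (eqVneq r c) => [<-|nrc]; first by rewrite h0 mul0r.
by rewrite hG ?mul0r.
Qed.

Lemma diagL (X G : 'M[F]_n) (s : 'I_n -> F) :
  (forall r k, X r k = (r == k)%:R * s k) -> forall r j, (X *m G) r j = s r * G r j.
Proof.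
move=> hX r j; rewrite mxE; under eq_bigr => k _ do rewrite hX eq_sym -mulrA.
by rewrite sum_pick.
Qed.

Lemma diagR (X G : 'M[F]_n) (s : 'I_n -> F) :
  (forall r k, X r k = (r == k)%:R * s k) -> forall r j, (G *m X) r j = G r j * s j.
Proof.
move=> hX r j; rewrite mxE; under eq_bigr => k _ do rewrite hX mulrCA.
by rewrite sum_pick.
Qed.

End Helpers.

Lemma ge2 (r : nat) : r != 0%N -> r != 1%N -> (2 <= r)%N.
Proof. lia. Qed.
Lemma ge3 (r : nat) : r != 0%N -> r != 1%N -> r != 2%N -> (3 <= r)%N.
Proof. lia. Qed.

Section Core.
Variable F : fieldType.
Variable n : nat.

Lemma core (A As : 'M[F]_n) (w0 w1 w2 : 'cV[F]_n)
  (t0 t1 t2 a0 a1 m01 m10 m21 s0 s1 : F) :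
  A *m w0 = t0 *: w0 -> A *m w1 = t1 *: w1 -> A *m w2 = t2 *: w2 ->
  As *m w0 = a0 *: w0 + m10 *: w1 -> As *m w1 = m01 *: w0 + a1 *: w1 + m21 *: w2 ->
  A *m (As *m (As *m w0) - (s0 + s1) *: (As *m w0) + (s0 * s1) *: w0) =
  t2 *: (As *m (As *m w0) - (s0 + s1) *: (As *m w0) + (s0 * s1) *: w0)
  + ((t2 - t1) * (s1 + s0 - a1 - a0)) *: (As *m w0)
  + ((t1 - t0) * (s1 + s0 - a1 - a0) * a0
     + (t2 - t0) * (a0 * a1 - m01 * m10 - s0 * s1)) *: w0.
Proof.
move=> hA0 hA1 hA2 hS0 hS1.
pose phi x y z := x *: w0 + y *: w1 + z *: w2.
have phiD x y z x' y' z' : phi x y z + phi x' y' z' = phi (x + x') (y + y') (z + z').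
  by rewrite /phi !scalerDl addrACA (addrACA (x *: w0)).
have phiN x y z : - phi x y z = phi (- x) (- y) (- z).
  by rewrite /phi !scaleNr !opprD.
have phiZ k x y z : k *: phi x y z = phi (k * x) (k * y) (k * z).
  by rewrite /phi !scalerDr !scalerA.
have phiA x y z : A *m phi x y z = phi (t0 * x) (t1 * y) (t2 * z).
  by rewrite /phi !mulmxDr -!scalemxAr hA0 hA1 hA2 !scalerA !(mulrC t0) !(mulrC t1) !(mulrC t2).
have h1 : As *m w0 = phi a0 m10 0 by rewrite /phi scale0r addr0.
have h1' : As *m w1 = phi m01 a1 m21 by [].
have phiS x y : As *m phi x y 0 = phi (x * a0 + y * m01) (x * m10 + y * a1) (y * m21).
  rewrite {1}/phi scale0r addr0 mulmxDr -!scalemxAr h1 h1' !phiZ phiD.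
  by rewrite mulr0 add0r.
have hw0 : w0 = phi 1 0 0 by rewrite /phi scale1r !scale0r !addr0.
rewrite h1 phiS.
rewrite hw0.
rewrite !phiZ !phiN !phiD phiA !phiZ !phiD.
congr (phi _ _ _); ring.
Qed.

End Core.
Arguments conj_sym {F n T Ti K Y N}.
Arguments diagL {F n X} G {s}.
Arguments diagR {F n X} G {s}.
Arguments mul_offdiag_r {F n} X {G}.
Arguments mul_offdiag_l {F n} X {G}.
Arguments offdiag_unit {F n G}.

Lemma rec_zero (F : fieldType) (d : nat) (cc bb : nat -> F) (t : F) (f : nat -> F) :
  f 0%N = 0 -> (forall i, (i < d)%N -> bb i != 0) ->
  (forall i, (i < d)%N -> cc i * f i.-1 + bb i * f i.+1 = t * f i) ->
  forall k, (k <= d)%N -> f k = 0.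
Proof.
move=> f0 hb hr.
have H : forall k, (k < d)%N -> f k = 0 /\ f k.+1 = 0.
  elim=> [|k IH] hk.
    split=> //; move: (hr 0%N hk); rewrite /= f0 !mulr0 add0r => /eqP.
    by rewrite mulf_eq0 (negbTE (hb 0%N hk)) => /eqP.
  have [_ h1] := IH (ltnW hk); split=> //.
  move: (hr k.+1 hk); rewrite /= h1 (proj1 (IH (ltnW hk))) !mulr0 add0r => /eqP.
  by rewrite mulf_eq0 (negbTE (hb k.+1 hk)) => /eqP.
case=> [|k] hk //; exact: (H k hk).2.
Qed.

Theorem proposition8p2 (F : fieldType) (d : nat) (hd : (3 <= d)%N)
  (Es : nat -> 'M[F]_d.+1) (A : 'M[F]_d.+1)
  (E : nat -> 'M[F]_d.+1) (th ths : nat -> F)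
  (v : nat -> 'cV[F]_d.+1) (alpha : nat -> F)
  (* E*_0..E*_d mutually orthogonal idempotents of rank 1 *)
  (hEs_orth : forall i j, (i <= d)%N -> (j <= d)%N ->
      Es i *m Es j = (if i == j then Es i else 0))
  (hEs_rank : forall i, (i <= d)%N -> \rank (Es i) = 1%N)
  (* tridiagonality conditions *)
  (hA0 : forall i j, (i <= d)%N -> (j <= d)%N -> (i.+1 < j)%N || (j.+1 < i)%N ->
      Es i *m A *m Es j = 0)
  (hA1 : forall i, (i < d)%N ->
      Es i *m A *m Es i.+1 != 0 /\ Es i.+1 *m A *m Es i != 0)
  (* A multiplicity-free with eigenvalues th_0..th_d and primitive idempotents E_0..E_d *)
  (hth_inj : forall i j, (i <= d)%N -> (j <= d)%N -> th i = th j -> i = j)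
  (hE_orth : forall i j, (i <= d)%N -> (j <= d)%N ->
      E i *m E j = (if i == j then E i else 0))
  (hE_sum : \sum_(i < d.+1) E i = 1%:M)
  (hE_nz : forall i, (i <= d)%N -> E i != 0)
  (hE_eig : forall i, (i <= d)%N -> A *m E i = th i *: E i)
  (* bipartite *)
  (hbip : forall i, (i <= d)%N -> \tr (Es i *m A) = 0)
  (* th*_0..th*_d mutually distinct *)
  (hths_inj : forall i j, (i <= d)%N -> (j <= d)%N -> ths i = ths j -> i = j)
  (* (E_0, E_1) is a tail and E_2 is the other neighbour of E_1 in Delta *)
  (htail0 : forall j, (j <= d)%N -> j != 0%N -> j != 1%N ->
      E 0%N *m dual_mx ths Es *m E j = 0)
  (htail1 : forall j, (j <= d)%N -> j != 0%N -> j != 1%N -> j != 2%N ->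
      E 1%N *m dual_mx ths Es *m E j = 0)
  (hE12 : E 1%N *m dual_mx ths Es *m E 2%N != 0)
  (* basis v_0..v_d with v_i in E*_i V *)
  (hv_in : forall i, (i <= d)%N -> Es i *m v i = v i)
  (hv_basis : basis_mx v \in unitmx)
  (* cosine sequence for th_0 *)
  (halpha0 : alpha 0%N = 1)
  (halpha : forall i, (i < d)%N ->
      ccoef v A i * alpha i.-1 + bcoef v A i * alpha i.+1 = th 0%N * alpha i) :
  (* for any basis w_0..w_d with w_i in E_i V, b*_0 c*_1 is computed from it *)
  forall (w : nat -> 'cV[F]_d.+1),
  (forall i, (i <= d)%N -> E i *m w i = w i) -> basis_mx w \in unitmx ->
  let As := dual_mx ths Es in
  let as_ := fun i => \tr (E i *m As) in
  let bc := rep_mx w As (inord 0) (inord 1) * rep_mx w As (inord 1) (inord 0) in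
  let psi := ths 1%N + ths 0%N - as_ 1%N - as_ 0%N in
  let zeta := as_ 0%N * as_ 1%N - bc - ths 0%N * ths 1%N in
  let b := bcoef v A in
  let c := ccoef v A in
  forall i, (i <= d)%N ->
    (if (0 < i)%N then
       c i * (ths i.-1 - ths 0%N) * (ths i.-1 - ths 1%N) * alpha i.-1 else 0)
    + (if (i < d)%N then
       b i * (ths i.+1 - ths 0%N) * (ths i.+1 - ths 1%N) * alpha i.+1 else 0)
    = th 2%N * (ths i - ths 0%N) * (ths i - ths 1%N) * alpha i
      + (th 2%N - th 1%N) * psi * ths i * alpha i
      + (th 1%N - th 0%N) * psi * as_ 0%N * alpha i
      + (th 2%N - th 0%N) * zeta * alpha i.
Proof.
move=> w hw hwb As as_ bc psi zeta b c i hi.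
have hd1 : (1 <= d)%N by apply: leq_trans hd.
have hd2 : (2 <= d)%N by apply: leq_trans hd.
set P := basis_mx v; set Q := basis_mx w.
have ord_le (j : 'I_d.+1) : (j <= d)%N by rewrite -ltnS.
have inord_neq (j : 'I_d.+1) k : (k <= d)%N -> j != inord k -> (j : nat) != k.
  move=> hk; apply: contra => /eqP hjk; apply/eqP/val_inj; by rewrite /= inordK.
have hEsP k : (k <= d)%N -> Es k *m P = P *m delta_mx (inord k) (inord k).
  move=> hk; apply: proj_rep => j; case: eqP => [->|njk].
    by rewrite inordK // hv_in.
  have hjk : (j : nat) != k by apply: inord_neq => //; apply/eqP.
  by rewrite -(hv_in j (ord_le j)) mulmxA hEs_orth // eq_sym (negbTE hjk) mul0mx.
have hEQ k : (k <= d)%N -> E k *m Q = Q *m delta_mx (inord k) (inord k).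
  move=> hk; apply: proj_rep => j; case: eqP => [->|njk].
    by rewrite inordK // hw.
  have hjk : (j : nat) != k by apply: inord_neq => //; apply/eqP.
  by rewrite -(hw j (ord_le j)) mulmxA hE_orth // eq_sym (negbTE hjk) mul0mx.
have hY0 (r j : 'I_d.+1) : (r.+1 < j)%N || (j.+1 < r)%N -> rep_mx v A r j = 0.
  move=> h; have := @entry_zero F d.+1 P A (Es r) (Es j) (inord r) (inord j) hv_basis
    (hEsP r (ord_le r)) (hEsP j (ord_le j)) (hA0 r j (ord_le r) (ord_le j) h).
  by rewrite !inord_val.
have hYd (r : 'I_d.+1) : rep_mx v A r r = 0.
  have := @trace_entry F d.+1 P A (Es r) (inord r) hv_basis (hEsP r (ord_le r)).
  by rewrite hbip ?ord_le // inord_val => <-.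
have hYnb (r j : 'I_d.+1) : (j : nat).+1 != r -> (r : nat).+1 != j -> rep_mx v A r j = 0.
  move=> h1 h2; case: (eqVneq j r) => [->|hjr]; first exact: hYd.
  apply: hY0; have : (j : nat) != r by [].
  move: h1 h2; lia.
have hbnz k : (k < d)%N -> b k != 0.
  move=> hk; rewrite /b /bcoef hk.
  exact: (@entry_nz F d.+1 P A (Es k) (Es k.+1) (inord k) (inord k.+1) hv_basis
    (hEsP k (ltnW hk)) (hEsP k.+1 hk) (hA1 k hk).1).
have hcnz k : (k < d)%N -> c k.+1 != 0.
  move=> hk; rewrite /c /ccoef /= hk.
  exact: (@entry_nz F d.+1 P A (Es k.+1) (Es k) (inord k.+1) (inord k) hv_basis
    (hEsP k.+1 hk) (hEsP k (ltnW hk)) (hA1 k hk).2).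
have Ytri (x : 'cV_d.+1) k : (k <= d)%N ->
    (rep_mx v A *m x) (inord k) 0 =
    (if (0 < k)%N then c k * x (inord k.-1) 0 else 0) +
    (if (k < d)%N then b k * x (inord k.+1) 0 else 0).
  move=> hk; rewrite mxE.
  have hkk : (inord k : 'I_d.+1) = k :> nat by rewrite inordK.
  have nb1 (j : 'I_d.+1) : j != inord k.-1 -> (0 < k)%N -> (j : nat).+1 != k.
    move=> hj k0; apply: contra hj => /eqP hj; apply/eqP/val_inj.
    rewrite /= inordK; lia.
  have nb2 (j : 'I_d.+1) : j != inord k.+1 -> (k < d)%N -> k.+1 != j.
    move=> hj k0; apply: contra hj => /eqP hj; apply/eqP/val_inj.
    rewrite /= inordK; lia.
  have hjd (j : 'I_d.+1) : (j <= d)%N := ord_le j.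
  case k0 : (0 < k)%N; case kd : (k < d)%N.
  - rewrite (bigD1 (inord k.-1)) // (bigD1 (inord k.+1)) /=; last first.
      apply/eqP => /(congr1 val); rewrite /= !inordK; lia.
    rewrite big1 ?addr0; last first.
      move=> j /andP [h1 h2]; rewrite hYnb ?mul0r // hkk.
        exact: nb1.
      exact: nb2.
    by rewrite /c /ccoef /b /bcoef k0 kd hk.
  - rewrite (bigD1 (inord k.-1)) // big1 ?addr0; last first.
      move=> j h1; rewrite hYnb ?mul0r // hkk; first exact: nb1.
      have := hjd j; lia.
    by rewrite /c /ccoef k0 hk /= addr0.
  - rewrite (bigD1 (inord k.+1)) // big1 ?addr0 ?add0r; last first.
      move=> j h1; rewrite hYnb ?mul0r // hkk; last exact: nb2.
      lia.
    by rewrite /b /bcoef kd /= addr0.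
  - lia.
have hAsv (j : 'I_d.+1) : As *m v j = ths j *: v j.
  rewrite /As /dual_mx mulmx_suml (bigD1 j) //= big1 ?addr0; last first.
    move=> k nk; rewrite -scalemxAl -(hv_in j (ord_le j)) mulmxA hEs_orth ?ord_le //.
    have -> : ((k : nat) == j) = false by apply/negbTE.
    by rewrite mul0mx scaler0.
  by rewrite -scalemxAl hv_in ?ord_le.
have hD := @diag_rep F d.+1 v As _ hv_basis hAsv.
have hAwk k : (k <= d)%N -> A *m w k = th k *: w k.
  by move=> hk; rewrite -(hw k hk) mulmxA hE_eig // -scalemxAl.
have hAw (j : 'I_d.+1) : A *m w j = th j *: w j by apply: hAwk.
have hL := @diag_rep F d.+1 w A _ hwb hAw.
set M := rep_mx w As.
have hM0 (j : 'I_d.+1) : (2 <= j)%N -> M (inord 0) j = 0.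
  move=> hj; have := @entry_zero F d.+1 Q As (E 0%N) (E j) (inord 0) (inord j) hwb
    (hEQ 0%N (leq0n _)) (hEQ j (ord_le j)) (htail0 j (ord_le j) _ _).
  rewrite inord_val; apply; lia.
have hM1 (j : 'I_d.+1) : (3 <= j)%N -> M (inord 1) j = 0.
  move=> hj; have := @entry_zero F d.+1 Q As (E 1%N) (E j) (inord 1) (inord j) hwb
    (hEQ 1%N _) (hEQ j (ord_le j)) (htail1 j (ord_le j) _ _ _).
  rewrite inord_val; apply; lia.
have has k : (k <= d)%N -> as_ k = M (inord k) (inord k).
  move=> hk; exact: (@trace_entry F d.+1 Q As (E k) (inord k) hwb (hEQ k hk)).
pose kap k := \prod_(l < k) (c l.+1 / b l).
have hkapS k : kap k.+1 = kap k * (c k.+1 / b k) by rewrite /kap big_ord_recr.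
have hkap k : (k <= d)%N -> kap k != 0.
  move=> hk; apply/prodf_neq0 => l _; rewrite mulf_neq0 ?invr_neq0 //.
    by apply: hcnz; have := ltn_ord l; lia.
  by apply: hbnz; have := ltn_ord l; lia.
pose K : 'M[F]_d.+1 := diag_mx (\row_(j < d.+1) kap j).
have [Y hYdef] : {Y : 'M[F]_d.+1 | Y = rep_mx v A} by exists (rep_mx v A).
move: hYnb Ytri; rewrite -hYdef => hYnb Ytri.
have hbY (r j : 'I_d.+1) : (j : nat) = r.+1 -> Y r j = b r.
  move=> hj; rewrite /b /bcoef.
  have hr : (r < d)%N by have := ltn_ord j; lia.
  rewrite hr hYdef; congr (rep_mx v A _ _); apply/val_inj; rewrite /= inordK //; lia.
have hcY (r j : 'I_d.+1) : (r : nat) = j.+1 -> Y r j = c r.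
  move=> hj; rewrite /c /ccoef.
  have hr : ((0 < r) && (r <= d))%N by have := ltn_ord r; lia.
  rewrite hr hYdef; congr (rep_mx v A _ _); apply/val_inj; rewrite /= inordK //; lia.
have hYK : Y *m K = K *m Y^T.
  rewrite mul_mx_diag mul_diag_mx; apply/eq_mx => r j.
  rewrite !mxE.
  case: (eqVneq (j : nat) r.+1) => [hj|hj1].
    rewrite (hbY r j hj) (hcY j r hj) hj hkapS.
    field; apply: hbnz; have := ltn_ord j; lia.
  case: (eqVneq (r : nat) j.+1) => [hr|hr1].
    rewrite (hcY r j hr) (hbY j r hr) hr hkapS.
    field; apply: hbnz; have := ltn_ord r; lia.
  case: (eqVneq r j) => [->|hrj]; first by rewrite mulrC.
  by rewrite !hYnb ?mulr0 ?mul0r // eq_sym.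
have [D hDdef] : {D : 'M[F]_d.+1 | D = rep_mx v As} by exists (rep_mx v As).
have [L hLdef] : {L : 'M[F]_d.+1 | L = rep_mx w A} by exists (rep_mx w A).
have [M' hMdef] : {M' : 'M[F]_d.+1 | M' = M} by exists M.
have {}hD r j : D r j = (r == j)%:R * ths j by rewrite hDdef; exact: hD.
have {}hL r j : L r j = (r == j)%:R * th j by rewrite hLdef; exact: hL.
move: hM0 hM1 has; rewrite -hMdef => hM0 hM1 has.
pose T := invmx P *m Q; pose Ti := invmx Q *m P.
have hTTi : T *m Ti = 1%:M by rewrite /T /Ti mulmxA mulmxK // mulVmx.
have hLT : L = Ti *m Y *m T by rewrite hLdef hYdef /rep_mx /T /Ti !mulmxA !mulmxK.
have hMT : M' = Ti *m D *m T by rewrite hMdef hDdef /M /rep_mx /T /Ti !mulmxA !mulmxK.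
have hDK : D *m K = K *m D^T.
  apply/matrixP => r j; rewrite mul_mx_diag mul_diag_mx !mxE !hD.
  case: (eqVneq r j) => [->|hrj] /=; first by rewrite !mul1r mulrC.
  by rewrite !mul0r mulr0.
have [G hGdef] : {G : 'M[F]_d.+1 | G = Ti *m K *m Ti^T} by exists (Ti *m K *m Ti^T).
have hLG : L *m G = G *m L^T by rewrite hGdef; exact: conj_sym hTTi hYK hLT.
have hMG : M' *m G = G *m M'^T by rewrite hGdef; exact: conj_sym hTTi hDK hMT.
have hLt r k : L^T r k = (r == k)%:R * th k.
  rewrite mxE !hL; case: (eqVneq r k) => [->|hrk] //=.
  by rewrite !mul0r.
have hGd (r j : 'I_d.+1) : r != j -> G r j = 0.
  move=> hrj; move/matrixP: hLG => /(_ r j).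
  rewrite (diagL _ hL) (diagR _ hLt) => /eqP; rewrite [G r j * _]mulrC -subr_eq0 -mulrBl.
  rewrite mulf_eq0 subr_eq0 => /orP [/eqP h|/eqP //].
  by move/hth_inj: h => /(_ (ord_le r) (ord_le j)) /val_inj /eqP; rewrite (negbTE hrj).
have hTiu : Ti \in unitmx.
  rewrite /Ti unitmx_mul unitmx_inv hwb /=; exact: hv_basis.
have hKu : K \in unitmx.
  rewrite unitmxE det_diag unitfE; apply/prodf_neq0 => l _; rewrite mxE; exact: hkap.
have hGu : G \in unitmx.
  by rewrite hGdef unitmx_mul unitmx_tr hTiu andbT unitmx_mul hTiu hKu.
have hGnz := offdiag_unit hGu hGd.
have hMs0 (j : 'I_d.+1) : (2 <= j)%N -> M' j (inord 0) = 0.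
  move=> hj; move/matrixP: hMG => /(_ j (inord 0)).
  rewrite (mul_offdiag_r _ hGd) (mul_offdiag_l _ hGd) mxE hM0 // mulr0 => /eqP.
  by rewrite mulf_eq0 (negbTE (hGnz _)) orbF => /eqP.
have hMs1 (j : 'I_d.+1) : (3 <= j)%N -> M' j (inord 1) = 0.
  move=> hj; move/matrixP: hMG => /(_ j (inord 1)).
  rewrite (mul_offdiag_r _ hGd) (mul_offdiag_l _ hGd) mxE hM1 // mulr0 => /eqP.
  by rewrite mulf_eq0 (negbTE (hGnz _)) orbF => /eqP.
have hAsQ : As *m Q = Q *m M' by rewrite hMdef /M /rep_mx -!mulmxA mulKVmx.
pose e k : 'cV[F]_d.+1 := delta_mx (inord k) 0.
have hQe k : (k <= d)%N -> Q *m e k = w k by move=> hk; rewrite basis_e inordK.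
have n01 : (inord 0 : 'I_d.+1) != inord 1.
  by apply/eqP => /(congr1 val); rewrite /= !inordK //; lia.
have n02 : (inord 0 : 'I_d.+1) != inord 2.
  by apply/eqP => /(congr1 val); rewrite /= !inordK //; lia.
have n12 : (inord 1 : 'I_d.+1) != inord 2.
  by apply/eqP => /(congr1 val); rewrite /= !inordK //; lia.
have hMe0 : M' *m e 0%N = M' (inord 0) (inord 0) *: e 0%N + M' (inord 1) (inord 0) *: e 1%N.
  apply/matrixP => r z; rewrite (ord1 z) -colE !mxE !eqxx !andbT.
  case: (eqVneq r (inord 0)) => [->|h0]; first by rewrite (negbTE n01) mulr0 addr0 mulr1.
  case: (eqVneq r (inord 1)) => [->|h1]; first by rewrite mulr0 add0r mulr1.
  rewrite !mulr0 addr0 hMs0 //; apply: ge2; by apply: inord_neq.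
have hMe1 : M' *m e 1%N = M' (inord 0) (inord 1) *: e 0%N + M' (inord 1) (inord 1) *: e 1%N
    + M' (inord 2) (inord 1) *: e 2%N.
  apply/matrixP => r z; rewrite (ord1 z) -colE !mxE !eqxx !andbT.
  case: (eqVneq r (inord 0)) => [->|h0].
    by rewrite (negbTE n01) (negbTE n02) !mulr0 !addr0 mulr1.
  case: (eqVneq r (inord 1)) => [->|h1].
    by rewrite (negbTE n12) !mulr0 addr0 add0r mulr1.
  case: (eqVneq r (inord 2)) => [->|h2]; first by rewrite !mulr0 !add0r mulr1.
  rewrite !mulr0 !addr0 hMs1 //; apply: ge3; by apply: inord_neq.
have hAs0 : As *m w 0%N = M' (inord 0) (inord 0) *: w 0%N + M' (inord 1) (inord 0) *: w 1%N.
  by rewrite -(hQe 0%N) // mulmxA hAsQ -mulmxA hMe0 mulmxDr -!scalemxAr !hQe.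
have hAs1 : As *m w 1%N = M' (inord 0) (inord 1) *: w 0%N + M' (inord 1) (inord 1) *: w 1%N
    + M' (inord 2) (inord 1) *: w 2%N.
  by rewrite -(hQe 1%N) // mulmxA hAsQ -mulmxA hMe1 !mulmxDr -!scalemxAr !hQe.
have hV := @core F d.+1 A As (w 0%N) (w 1%N) (w 2%N) _ _ _ _ _ _ _ _ (ths 0%N) (ths 1%N) (hAwk 0%N (leq0n _)) (hAwk 1%N hd1)
  (hAwk 2%N hd2) hAs0 hAs1.
have hcvA x : invmx P *m (A *m x) = Y *m (invmx P *m x).
  by rewrite hYdef /rep_mx !mulmxA mulmxK.
have hcvS x : invmx P *m (As *m x) = D *m (invmx P *m x).
  by rewrite hDdef /rep_mx !mulmxA mulmxK.
have [z hzdef] : {z : 'cV[F]_d.+1 | z = invmx P *m w 0%N} by eexists.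
have hYz : Y *m z = th 0%N *: z.
  by rewrite hzdef -hcvA hAwk // -scalemxAr.
have hZ := congr1 (mulmx (invmx P)) hV.
have [y1 hy1] : {y1 : 'cV[F]_d.+1 | y1 = D *m z} by eexists.
have [y2 hy2] : {y2 : 'cV[F]_d.+1 | y2 = D *m y1} by eexists.
have [X hX] : {X : 'cV[F]_d.+1 | X = y2 - (ths 0%N + ths 1%N) *: y1 + (ths 0%N * ths 1%N) *: z}.
  by eexists.
have hp : invmx P *m (As *m (As *m w 0%N) - (ths 0%N + ths 1%N) *: (As *m w 0%N)
    + (ths 0%N * ths 1%N) *: w 0%N) = X.
  by rewrite hX !mulmxDr mulmxN -!scalemxAr !hcvS -hzdef -hy1 -hy2.
move: hZ; rewrite !(mulmxDr (invmx P)) -!scalemxAr hcvA hp hcvS -hzdef -hy1 => hZ.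
have hDx x r : (D *m x) r 0 = ths r * x r 0.
  rewrite mxE; under eq_bigr => k _ do rewrite hD eq_sym -mulrA.
  by rewrite sum_pick.
have hy1e r : y1 r 0 = ths r * z r 0 by rewrite hy1 hDx.
have hy2e r : y2 r 0 = ths r * y1 r 0 by rewrite hy2 hDx.
pose zf k := z (inord k) 0.
have hrec k : (k < d)%N -> c k * zf k.-1 + b k * zf k.+1 = th 0%N * zf k.
  move=> hk; have := Ytri z k (ltnW hk); rewrite hYz mxE hk => ->.
  by case: k hk => [|k] hk //=; rewrite /c /ccoef /= !mul0r.
have hz0 : zf 0%N != 0.
  apply/negP => /eqP h0.
  have hall := @rec_zero F d c b (th 0%N) zf h0 hbnz hrec.
  have z0 : z = 0.
    apply/matrixP => r q; rewrite (ord1 q) mxE -(inord_val r); exact: hall.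
  have : w 0%N = 0 by rewrite -[w 0%N](mulKVmx hv_basis) -/P -hzdef z0 mulmx0.
  rewrite -(hQe 0%N) // => /(congr1 (mulmx (invmx Q))); rewrite mulKmx // mulmx0.
  by move/matrixP => /(_ (inord 0) 0); rewrite !mxE !eqxx /= => /eqP; rewrite oner_eq0.
have hal k : (k <= d)%N -> zf k = alpha k * zf 0%N.
  move=> hk; apply/eqP; rewrite -subr_eq0; apply/eqP; move: k hk.
  apply: (@rec_zero F d c b (th 0%N)); first by rewrite halpha0 mul1r subrr.
    exact: hbnz.
  move=> k hk.
  have -> : c k * (zf k.-1 - alpha k.-1 * zf 0%N) + b k * (zf k.+1 - alpha k.+1 * zf 0%N)
    = (c k * zf k.-1 + b k * zf k.+1) - (c k * alpha k.-1 + b k * alpha k.+1) * zf 0%N.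
    by ring.
  by rewrite hrec // halpha //; ring.
have hDx' x r : (D *m x) r 0 = ths r * x r 0 by exact: hDx.
have hy1e' r : y1 r 0 = ths r * z r 0 by rewrite hy1 hDx'.
have hXe r : X r 0 = ths r * (ths r * z r 0) - (ths 0%N + ths 1%N) * (ths r * z r 0)
    + (ths 0%N * ths 1%N) * z r 0.
  by rewrite hX !mxE hy2 hDx' hy1e'.
have hal' k : (k <= d)%N -> z (inord k) 0 = alpha k * z (inord 0) 0 by exact: hal.
have hz0' : z (inord 0) 0 != 0 by exact: hz0.
have hbc : bc = M' (inord 0) (inord 1) * M' (inord 1) (inord 0) by rewrite hMdef.
move/matrixP: hZ => /(_ (inord i) 0); rewrite Ytri // !mxE !hXe hy1e'.
rewrite /psi /zeta (has 0%N) // (has 1%N) // hbc.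
have hpred : (i.-1 <= d)%N := leq_trans (leq_pred i) hi.
case h0 : (0 < i)%N; case hdd : (i < d)%N => /= hZ.
- rewrite (hal' i.-1 hpred) (hal' i.+1 hdd) (hal' i hi) (@inordK d i.-1 hpred)
    (@inordK d i.+1 hdd) (@inordK d i hi) in hZ.
  apply: (mulIf hz0'); apply/eqP; rewrite -subr_eq0; apply/eqP.
  move/eqP: hZ; rewrite -subr_eq0 => /eqP hZ; rewrite -[X in _ = X]hZ; ring.
- rewrite (hal' i.-1 hpred) (hal' i hi) (@inordK d i.-1 hpred) (@inordK d i hi) in hZ.
  apply: (mulIf hz0'); apply/eqP; rewrite -subr_eq0; apply/eqP.
  move/eqP: hZ; rewrite -subr_eq0 => /eqP hZ; rewrite -[X in _ = X]hZ; ring.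
- rewrite (hal' i.+1 hdd) (hal' i hi) (@inordK d i.+1 hdd) (@inordK d i hi) in hZ.
  apply: (mulIf hz0'); apply/eqP; rewrite -subr_eq0; apply/eqP.
  move/eqP: hZ; rewrite -subr_eq0 => /eqP hZ; rewrite -[X in _ = X]hZ; ring.
- by move: h0 hdd; case: (i) => //= _; rewrite hd1.
Qed.
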